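(* Let $\varepsilon>0$ and choose $\alpha$ with $0<\alpha\leq \varepsilon/(2M)$. If a pair $(x,s)\in\mathrm{dom}\, h\times\mathbb{R}^n$ satisfies $\phi^\alpha(x)+\psi^\alpha(s)\leq\varepsilon/2$, then $\phi(x)-\phi_*\leq \varepsilon$.
   Context: Let $\|\cdot\|$ be a norm on $\mathbb{R}^n$ with dual norm $\|\cdot\|_*$. Let $f:\mathbb{R}^n\to\mathbb{R}$ be convex, differentiable and $L$-smooth ($L>0$) with respect to $\|\cdot\|$, and let $h:\mathbb{R}^n\to(-\infty,\infty]$ be closed proper convex with bounded domain $\mathrm{dom}\, h$. Let $w:\mathbb{R}^n\to[0,+\infty]$ be non-negative, closed, and $1$-strongly convex with respect to $\|\cdot\|$ on $\mathrm{dom}\, h$, with $M:=\max_{x\in\mathrm{dom}\, h}w(x)<\infty$. Define $\phi=f+h$, $\phi_*=\min_{x\in\mathbb{R}^n}\phi(x)$, and for $\alpha>0$: $h^\alpha=h+\alpha w$, $\phi^\alpha=f+h^\alpha$, and $\psi^\alpha(z)=(h^\alpha)^*(-z)+f^*(z)$, where $g^*(y)=\sup_x\{\langle y,x\rangle-g(x)\}$ denotes the convex conjugate. *)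

(* Defs.v *)
From HB Require Import structures.
From mathcomp Require Import all_boot all_order all_algebra.
From mathcomp Require Import all_classical all_reals all_analysis.
Set Implicit Arguments. Unset Strict Implicit. Unset Printing Implicit Defensive.
Import Order.TTheory GRing.Theory Num.Theory.
Import numFieldNormedType.Exports.
Local Open Scope classical_set_scope.
Local Open Scope ring_scope.

Section Defs.
Variables (R : realType) (n : nat).
Local Notation V := 'rV[R]_n.

Definition dotv (y x : V) : R := \sum_(i < n) y ord0 i * x ord0 i.

Definition is_norm (N : V -> R) : Prop :=
  [/\ forall x, N x = 0 -> x = 0,
      forall (a : R) x, N (a *: x) = `|a| * N x &
      forall x y, N (x + y) <= N x + N y].

Definition dual_norm (N : V -> R) (y : V) : \bar R :=
  ereal_sup [set (dotv y x)%:E | x in [set x | N x <= 1]].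

Definition grad (f : V -> R) (x : V) : V := \row_(i < n) ('d f x (delta_mx 0 i)).

Definition convex_fun (f : V -> R) : Prop :=
  forall (x y : V) (t : R), 0 < t < 1 ->
    f (t *: x + (1 - t) *: y) <= t * f x + (1 - t) * f y.

Definition L_smooth (N : V -> R) (L : R) (f : V -> R) : Prop :=
  forall x y, (dual_norm N (grad f x - grad f y) <= (L * N (x - y))%:E)%E.

(* extended-real valued functions R^n -> (-oo, +oo] *)
Definition dom (g : V -> \bar R) : set V := [set x | (g x < +oo)%E].

Definition convex_efun (g : V -> \bar R) : Prop :=
  forall (x y : V) (t : R), 0 < t < 1 ->
    (g ((t *: x + (1 - t) *: y)%R) <= t%:E * g x + ((1 - t)%R)%:E * g y)%E.

Definition proper_efun (g : V -> \bar R) : Prop :=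
  (forall x, g x != -oo%E) /\ exists x, (g x < +oo)%E.

Definition closed_efun (g : V -> \bar R) : Prop := lower_semicontinuous g.

Definition strongly_convex_on (N : V -> R) (D : set V) (g : V -> \bar R) : Prop :=
  forall (x y : V) (t : R), D x -> D y -> 0 < t < 1 ->
    (g ((t *: x + (1 - t) *: y)%R) <=
       t%:E * g x + ((1 - t)%R)%:E * g y - ((t * (1 - t) / 2 * N (x - y) ^+ 2)%R)%:E)%E.

Definition conj_efun (g : V -> \bar R) (y : V) : \bar R :=
  ereal_sup [set ((dotv y x)%:E - g x)%E | x in [set: V]].

Definition conj_fun (f : V -> R) (y : V) : \bar R :=
  ereal_sup [set (dotv y x - f x)%:E | x in [set: V]].

Definition phi (f : V -> R) (h : V -> \bar R) (x : V) : \bar R := ((f x)%:E + h x)%E.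

(* phi_* = min_x phi(x) (taken as the infimum; attained under the hypotheses) *)
Definition phi_star (f : V -> R) (h : V -> \bar R) : \bar R :=
  ereal_inf [set phi f h x | x in [set: V]].

Definition h_alpha (h w : V -> \bar R) (alpha : R) (x : V) : \bar R :=
  (h x + alpha%:E * w x)%E.

Definition phi_alpha (f : V -> R) (h w : V -> \bar R) (alpha : R) (x : V) : \bar R :=
  ((f x)%:E + h_alpha h w alpha x)%E.

Definition psi_alpha (f : V -> R) (h w : V -> \bar R) (alpha : R) (z : V) : \bar R :=
  (conj_efun (h_alpha h w alpha) (- z) + conj_fun f z)%E.

End Defs.

(* Main.v *)
Require Import Defs.
From HB Require Import structures.
From mathcomp Require Import all_boot all_order all_algebra.
From mathcomp Require Import all_classical all_reals all_analysis.
From mathcomp Require Import lra.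
Import Order.TTheory GRing.Theory Num.Theory.
Import numFieldNormedType.Exports.
Local Open Scope classical_set_scope.
Local Open Scope ring_scope.

Lemma dotvN (R : realType) (n : nat) (s u : 'rV[R]_n) : dotv (- s) u = - dotv s u.
Proof.
rewrite /dotv -sumrN; apply: eq_bigr => i _; by rewrite mxE mulNr.
Qed.

Theorem lemma2p1 (R : realType) (n : nat)
  (N : 'rV[R]_n -> R) (f : 'rV[R]_n -> R) (h w : 'rV[R]_n -> \bar R)
  (L M eps alpha : R) (x s : 'rV[R]_n) :
  is_norm N ->
  convex_fun f -> (forall y, differentiable f y) -> 0 < L -> L_smooth N L f ->
  proper_efun h -> closed_efun h -> convex_efun h ->
  (exists B : R, forall y, dom h y -> N y <= B) ->
  (forall y, (0 <= w y)%E) -> closed_efun w ->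
  strongly_convex_on N (dom h) w ->
  (exists2 y0, dom h y0 & w y0 = M%:E) ->
  (forall y, dom h y -> (w y <= M%:E)%E) ->
  0 < eps -> 0 < alpha -> alpha * (2 * M) <= eps ->
  dom h x ->
  (phi_alpha f h w alpha x + psi_alpha f h w alpha s <= (eps / 2)%:E)%E ->
  (phi f h x - phi_star f h <= eps%:E)%E.
Proof.
move=> _ _ _ _ _ [hnoo _] _ _ _ w0 _ _ _ wM eps0 al0 alM domx H.
have hxE : exists hx, h x = hx%:E.
  move: (hnoo x) domx; rewrite /dom /=; case: (h x) => [hx| |] //= _ _; by exists hx.
case: hxE => hx hxE.
have wxE : exists wx, w x = wx%:E /\ 0 <= wx.
  move: (wM x domx) (w0 x); case: (w x) => [wx| |] //= _; rewrite lee_fin => ?; by exists wx.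
case: wxE => wx [wxE wx0].
have key : forall u, ((f x + hx - eps)%:E <= phi f h u)%E.
  move=> u; rewrite /phi.
  case hu: (h u) => [hu'| |]; last first.
  - by move: (hnoo u); rewrite hu.
  - by rewrite /= addey ?leey.
  have domu : dom h u by rewrite /dom /= hu ltry.
  have wuE : exists wu, w u = wu%:E /\ wu <= M.
    move: (wM u domu) (w0 u); case: (w u) => [wu| |] //=; rewrite lee_fin => ? _; by exists wu.
  case: wuE => wu [wuE wuM].
  have c1 : (((dotv (- s) u) - hu' - alpha * wu)%:E <= conj_efun (h_alpha h w alpha) (- s))%E.
    apply: ereal_sup_ubound; exists u => //.
    by rewrite /h_alpha hu wuE /= -EFinD opprD addrA.
  have c2 : ((dotv s u - f u)%:E <= conj_fun f s)%E.
    by apply: ereal_sup_ubound; exists u.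
  have c3 := leeD c1 c2.
  move: H; rewrite /phi_alpha /h_alpha /psi_alpha hxE wxE /= -EFinM -!EFinD => H.
  have c4 := leeD (lexx ((f x + (hx + alpha * wx))%:E)) c3.
  have := le_trans c4 H; rewrite -!EFinD lee_fin dotvN => H2.
  rewrite -[X in (_ <= X)%E]/((f u + hu')%:E) lee_fin.
  have : alpha * wu <= alpha * M by rewrite ler_wpM2l // ltW.
  have : 0 <= alpha * wx by rewrite mulr_ge0 // ltW.
  lra.
have lb : ((f x + hx - eps)%:E <= phi_star f h)%E.
  apply: le_ereal_inf_tmp => _ [u _ <-]; exact: key.
rewrite /phi hxE.
move: lb; case: (phi_star f h) => [p| |] //=.
- rewrite lee_fin => ?; rewrite -[X in (X <= _)%E]/((f x + hx - p)%:E) lee_fin; lra.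
- by rewrite -EFinD /= leNye.
Qed.
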